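(* Let $G$ be a connected graph, $c\in V(G)$, and run the scan procedure at $c$ (with any processing order). Let $e$ and $f$ be distinct edges incident to $c$. If at least one of the following holds: (a) $e$ and $f$ span a square that has a chord; (b) $e$ and $f$ span a square whose top vertex is not unique; (c) $e$ and $f$ span more than one square; then $(e,f)\in\beta_c^*$, the transitive closure of $\beta_c$.
   Context: All graphs are finite, simple, undirected; $N(x)$ is the open neighborhood of $x$. For distinct edges $e=vu$, $f=vw$ sharing the vertex $v$, a square spanned by $e$ and $f$ is a 4-cycle $vuxw$ with $x\ne v$ adjacent to both $u$ and $w$; $x$ is its top vertex. The square has a chord if $uw\in E$ or $vx\in E$. A top vertex $x$ is unique if $|N(x)\cap N(v)|=2$. Scan procedure at $c$: the vertices of $N(c)$ are called primal, and edges incident to $c$ primal edges. Maintain two sets $I$ (incidence list) and $A$ (absence list) of unordered pairs of primal edges, both initially empty, and for every non-primal vertex $w\ne c$ a record of at most two ''recorded primal neighbors'' (first and second), initially none. Process the neighbors $u$ of $c$ one by one in an arbitrary order, and for each such $u$ process its neighbors $w\neq c$ in an arbitrary order: (1) if $w\in N(c)$, add $\{cu,cw\}$ to $A$; (2) else, if $w$ has no recorded primal neighbor, record $u$ as its first primal neighbor; (3) else, if $w$ has exactly one recorded primal neighbor $v$, record $u$ as its second primal neighbor, and if $\{cu,cv\}\notin I$ add $\{cu,cv\}$ to $I$, otherwise add $\{cu,cv\}$ to $A$; (4) else ($w$ has recorded first and second primal neighbors $v_1,v_2$) add $\{cv_1,cv_2\},\{cv_1,cu\},\{cv_2,cu\}$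 to $A$ (the record is not changed). After the procedure, $\alpha_c$ is the symmetric relation on primal edges consisting of the pairs in $I$, $\beta_c$ the symmetric relation consisting of the pairs in $A$, and $\overline{\alpha}_c$ the set of pairs of primal edges not in $I$. *)

(* Defs.v *)
From Stdlib Require Import Relations.
From mathcomp Require Import all_boot.
Set Implicit Arguments. Unset Strict Implicit. Unset Printing Implicit Defensive.

(* A simple graph: vertex type T (finite), adjacency adj (symmetric, irreflexive).
   A primal edge c--u is identified with its primal endpoint u. *)

Definition connected_graph (T : finType) (adj : rel T) : Prop :=
  forall x y : T, connect adj x y.

(* State of the scan procedure: incidence list I, absence list A (sets of
   unordered pairs of primal edges, stored with both orientations), and the
   record of recorded primal neighbors (at most two, in order first, second). *)
Record scan_state (T : finType) := ScanState {
  st_I : {set T * T};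
  st_A : {set T * T};
  st_rec : T -> seq T }.

Definition add_pair (T : finType) (S : {set T * T}) (a b : T) : {set T * T} :=
  S :|: [set (a, b); (b, a)].

Definition upd_rec (T : finType) (r : T -> seq T) (w : T) (s : seq T) : T -> seq T :=
  fun y => if y == w then s else r y.

Definition scan_step_w (T : finType) (adj : rel T) (c u : T)
    (st : scan_state T) (w : T) : scan_state T :=
  let: ScanState Ii Aa r := st in
  if adj c w then ScanState Ii (add_pair Aa u w) r
  else match r w with
       | [::] => ScanState Ii Aa (upd_rec r w [:: u])
       | [:: v] =>
           if (u, v) \notin Ii then ScanState (add_pair Ii u v) Aa (upd_rec r w [:: v; u])
           else ScanState Ii (add_pair Aa u v) (upd_rec r w [:: v; u])
       | v1 :: v2 :: _ =>
           ScanState Ii (add_pair (add_pair (add_pair Aa v1 v2) v1 u) v2 u) r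
       end.

Definition scan_step_u (T : finType) (adj : rel T) (c : T) (nbr : T -> seq T)
    (st : scan_state T) (u : T) : scan_state T :=
  foldl (scan_step_w adj c u) st (nbr u).

Definition scan_init (T : finType) : scan_state T :=
  ScanState set0 set0 (fun _ => [::]).

Definition scan (T : finType) (adj : rel T) (c : T) (ord : seq T)
    (nbr : T -> seq T) : scan_state T :=
  foldl (scan_step_u adj c nbr) (scan_init T) ord.

Definition valid_order (T : finType) (adj : rel T) (c : T) (ord : seq T)
    (nbr : T -> seq T) : Prop :=
  uniq ord /\ (forall u, (u \in ord) = adj c u) /\
  (forall u, adj c u -> uniq (nbr u) /\ forall w, (w \in nbr u) = adj u w && (w != c)).

Definition beta_c (T : finType) (adj : rel T) (c : T) (ord : seq T)
    (nbr : T -> seq T) : relation T :=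
  fun u v => (u, v) \in st_A (scan adj c ord nbr).

Definition square_top (T : finType) (adj : rel T) (c u w x : T) : Prop :=
  x != c /\ adj u x /\ adj w x.

Definition square_has_chord (T : finType) (adj : rel T) (c u w x : T) : Prop :=
  adj u w \/ adj c x.

Definition unique_top (T : finType) (adj : rel T) (c x : T) : Prop :=
  #|[set y | adj x y && adj c y]| = 2.

(* Main.v *)
Require Import Defs.
From Stdlib Require Import Relations.
From mathcomp Require Import all_boot.
Set Implicit Arguments. Unset Strict Implicit. Unset Printing Implicit Defensive.

Definition step_e (T : finType) (adj : rel T) (c : T) (st : scan_state T) (e : T * T) :=
  scan_step_w adj c e.1 st e.2.
Definition events (T : finType) (ord : seq T) (nbr : T -> seq T) : seq (T * T) :=
  flatten [seq [seq (u, w) | w <- nbr u] | u <- ord].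
Definition Lx (T : finType) (x : T) (s : seq (T * T)) : seq T := [seq e.1 | e <- s & e.2 == x].

Lemma scan_events T adj c ord nbr :
  scan adj c ord nbr = foldl (step_e adj c) (scan_init T) (events ord nbr).
Proof.
rewrite /scan /events; elim: ord (scan_init T) => //= u o IH st.
rewrite foldl_cat -IH /scan_step_u; congr foldl.
by elim: (nbr u) st => //= w l IHl st; rewrite IHl.
Qed.

Lemma in_add_pair1 (T : finType) (S : {set T * T}) (a b : T) : (a, b) \in Defs.add_pair S a b.
Proof. by rewrite /Defs.add_pair !inE eqxx !orbT. Qed.
Lemma in_add_pair2 (T : finType) (S : {set T * T}) (a b : T) : (b, a) \in Defs.add_pair S a b.
Proof. by rewrite /Defs.add_pair !inE eqxx !orbT. Qed.
Lemma in_add_pairS (T : finType) (S : {set T * T}) (a b : T) p : p \in S -> p \in Defs.add_pair S a b.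
Proof. by rewrite /Defs.add_pair !inE => ->. Qed.

Lemma step_A_sub T adj c st e : st_A st \subset st_A (@step_e T adj c st e).
Proof.
case: st e => I A r [u w]; rewrite /step_e /=.
case: (adj c w) => /=; first exact: subsetUl.
case: (r w) => [|v [|v2 l]] /=; try exact: subxx.
  by case: ifP => _ /=; [exact: subxx | exact: subsetUl].
by rewrite /Defs.add_pair -!setUA subsetUl.
Qed.

Lemma step_I_sub T adj c st e : st_I st \subset st_I (@step_e T adj c st e).
Proof.
case: st e => I A r [u w]; rewrite /step_e /=.
case: (adj c w) => /=; first exact: subxx.
case: (r w) => [|v [|v2 l]] /=; try exact: subxx.
by case: ifP => _ /=; [exact: subsetUl | exact: subxx].
Qed.

Lemma fold_A_sub T adj c st s : st_A st \subset st_A (foldl (@step_e T adj c) st s).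
Proof.
elim: s st => [|e s IH] st /=; first exact: subxx.
exact: (subset_trans (step_A_sub adj c st e) (IH _)).
Qed.

Lemma fold_I_sub T adj c st s : st_I st \subset st_I (foldl (@step_e T adj c) st s).
Proof.
elim: s st => [|e s IH] st /=; first exact: subxx.
exact: (subset_trans (step_I_sub adj c st e) (IH _)).
Qed.

Definition symS (T : finType) (S : {set T * T}) := forall a b, (a, b) \in S -> (b, a) \in S.

Lemma symS_add (T : finType) (S : {set T * T}) (a b : T) : symS S -> symS (Defs.add_pair S a b).
Proof.
move=> h x y; rewrite /Defs.add_pair !inE => /orP[/h -> //|/orP[]] /eqP[-> ->];
  by rewrite eqxx !orbT.
Qed.

Lemma step_symI T adj c st e : symS (st_I st) -> symS (st_I (@step_e T adj c st e)).
Proof.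
case: st e => I A r [u w]; rewrite /step_e /= => h.
case: (adj c w) => //=.
case: (r w) => [|v [|v2 l]] //=.
by case: ifP => _ //=; apply: symS_add.
Qed.

Lemma fold_symI T adj c st s : symS (st_I st) -> symS (st_I (foldl (@step_e T adj c) st s)).
Proof. elim: s st => [|e s IH] st //= h; apply: IH; exact: step_symI. Qed.

Lemma Lx_cat (T : finType) (x : T) s1 s2 : Lx x (s1 ++ s2) = Lx x s1 ++ Lx x s2.
Proof. by rewrite /Lx filter_cat map_cat. Qed.

Lemma memLx (T : finType) (x y : T) s : y \in Lx x s -> (y, x) \in s.
Proof. by move=> /mapP[[a b]]; rewrite mem_filter /= => /andP[/eqP -> h] ->. Qed.

Lemma rec_fold T adj c x s : ~~ adj c x ->
  st_rec (foldl (@step_e T adj c) (scan_init T) s) x = take 2 (Lx x s).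
Proof.
move=> hx; elim/last_ind: s => [|s e IH] //.
rewrite foldl_rcons -cats1 Lx_cat /=.
move: IH; case: (foldl _ _ s) => I A r /= IH.
case: e => u w; rewrite /step_e /Lx /=.
case: (eqVneq w x) => [->|hwx] /=.
  rewrite (negbTE hx) IH -/(Lx x s); case E: (Lx x s) => [|v [|v2 l]] /=;
   rewrite /upd_rec ?eqxx ?IH ?E /= ?take0 //; try by case: ifP => _; rewrite /= eqxx.
rewrite cats0 -/(Lx x s) -IH.
case: (adj c w) => //=.
have hxw : (x == w) = false by rewrite eq_sym (negbTE hwx).
case: (r w) => [|v [|v2 l]] /=; rewrite ?/upd_rec ?hxw //.
by case: ifP => _ /=; rewrite hxw.
Qed.

Lemma ev_E1 (T : finType) (adj : rel T) (c : T) (st : scan_state T) (u w : T) : adj c w ->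
  (u, w) \in st_A (@step_e T adj c st (u, w)) /\ (w, u) \in st_A (step_e adj c st (u, w)).
Proof. case: st => I A r; rewrite /step_e /= => -> /=; by rewrite in_add_pair1 in_add_pair2. Qed.

Lemma ev_E3 (T : finType) (adj : rel T) (c : T) (st : scan_state T) (u x v1 v2 : T) : ~~ adj c x -> st_rec st x = [:: v1; v2] ->
  let A' := st_A (@step_e T adj c st (u, x)) in
  [/\ (v1, v2) \in A', (v2, v1) \in A', (v1, u) \in A' & (u, v1) \in A'].
Proof.
case: st => I A r; rewrite /step_e /= => /negbTE -> -> /=.
split; do ?[exact: in_add_pair1 | exact: in_add_pair2 | apply: in_add_pairS].
Qed.

Lemma ev_E2I (T : finType) (adj : rel T) (c : T) (st : scan_state T) (u x v : T) : ~~ adj c x -> st_rec st x = [:: v] ->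
  (u, v) \in st_I (@step_e T adj c st (u, x)).
Proof.
case: st => I A r; rewrite /step_e /= => /negbTE -> -> /=.
by case: ifP => [_|/negbFE] //=; rewrite in_add_pair1.
Qed.

Lemma ev_E2A (T : finType) (adj : rel T) (c : T) (st : scan_state T) (u x v : T) : ~~ adj c x -> st_rec st x = [:: v] ->
  (u, v) \in st_I st ->
  (u, v) \in st_A (@step_e T adj c st (u, x)) /\ (v, u) \in st_A (@step_e T adj c st (u, x)).
Proof.
case: st => I A r; rewrite /step_e /= => /negbTE -> -> /= ->.
by rewrite /= in_add_pair1 in_add_pair2.
Qed.

Lemma Lx_pairs (T : finType) (u x : T) (l : seq T) : uniq l ->
  Lx x [seq (u, w) | w <- l] = if x \in l then [:: u] else [::].
Proof.
move=> ul; rewrite /Lx filter_map -map_comp.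
rewrite (@eq_filter _ _ (pred1 x)); last by move=> y.
case: ifP => hx; first by rewrite filter_pred1_uniq.
rewrite (@eq_in_filter _ _ pred0); first by rewrite filter_pred0.
by move=> y hy /=; apply/eqP => eyx; rewrite -eyx hy in hx.
Qed.

Lemma Lx_events (T : finType) (x : T) ord nbr :
  (forall u, u \in ord -> uniq (nbr u)) ->
  Lx x (events ord nbr) = [seq u <- ord | x \in nbr u].
Proof.
elim: ord => //= u o IH h.
rewrite /events /= Lx_cat Lx_pairs; last by apply: h; rewrite inE eqxx.
rewrite -/(events o nbr) IH; first by case: ifP.
by move=> v hv; apply: h; rewrite inE hv orbT.
Qed.

Lemma mem_events (T : finType) ord nbr (u w : T) :
  u \in ord -> w \in nbr u -> (u, w) \in events ord nbr.
Proof.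
move=> hu hw; apply/flattenP; exists [seq (u, w) | w <- nbr u].
  by apply: (map_f (fun u => [seq (u, w) | w <- nbr u])).
exact: (map_f (pair u)).
Qed.

Lemma fin_A_of (T : finType) (adj : rel T) (c : T) (s p q : seq (T * T)) (e : T * T) (a b : T) : s = p ++ e :: q ->
  (a, b) \in st_A (step_e adj c (foldl (step_e adj c) (scan_init T) p) e) ->
  (a, b) \in st_A (foldl (step_e adj c) (scan_init T) s).
Proof.
move=> -> h; rewrite foldl_cat /=.
exact: (subsetP (fold_A_sub _ _ _ _) _ h).
Qed.

Lemma Lx_cons_self (T : finType) (x y : T) q : Lx x ((y, x) :: q) = y :: Lx x q.
Proof. by rewrite /Lx /= eqxx. Qed.

Notation fin adj c s := (foldl (step_e adj c) (scan_init _) s).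

Lemma split_ex (T : eqType) (x : T) s : x \in s -> exists p q, s = p ++ x :: q.
Proof. by case/splitPr => p q; exists p, q. Qed.

Lemma three_lemma (T : finType) (adj : rel T) (c : T) (s : seq (T * T)) (x a b z : T) rest :
  ~~ adj c x -> Lx x s = [:: a, b, z & rest] -> uniq [:: a, b, z & rest] ->
  forall y, y \in [:: b, z & rest] ->
   (a, y) \in st_A (fin adj c s) /\ (y, a) \in st_A (fin adj c s).
Proof.
move=> hx hL hu.
move: (hu) => /= /andP[ha /andP[hb _]].
have ha' : a \notin z :: rest.
  by apply/negP => h; move/negP: ha; apply; rewrite in_cons h orbT.
have key : forall y, y \in z :: rest ->
  [/\ (a, b) \in st_A (fin adj c s), (b, a) \in st_A (fin adj c s),
      (a, y) \in st_A (fin adj c s) & (y, a) \in st_A (fin adj c s)].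
  move=> y hy.
  have hm : y \in Lx x s.
    by rewrite hL (_ : [:: a, b, z & rest] = [:: a; b] ++ z :: rest) // mem_cat hy orbT.
  have [p [q hs]] := split_ex (memLx hm).
  have hrec := rec_fold p hx.
  have hL' : Lx x p ++ y :: Lx x q = [:: a, b, z & rest].
    by rewrite -hL hs Lx_cat Lx_cons_self.
  move: hL' hrec; case: (Lx x p) => [|a' [|b' l]] /=.
  - by move=> [ya _]; rewrite -ya hy in ha'.
  - by move=> [_ yb _]; rewrite -yb hy in hb.
  - move=> [ea eb _] hrec; rewrite take0 ea eb in hrec.
    have [h1 h2 h3 h4] := ev_E3 y hx hrec.
    by split; apply: (fin_A_of hs).
move=> y; rewrite in_cons => /orP[/eqP ->|hy].
  by have [h1 h2 _ _] := key z (mem_head _ _).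
by have [_ _ h3 h4] := key y hy.
Qed.

Lemma gen3 (T : finType) (adj : rel T) (c : T) (s : seq (T * T)) (x u w : T) :
  ~~ adj c x -> uniq (Lx x s) -> u \in Lx x s -> w \in Lx x s -> u != w ->
  2 < size (Lx x s) -> clos_trans T (fun a b => (a, b) \in st_A (fin adj c s)) u w.
Proof.
move=> hx; case E: (Lx x s) => [|a [|b [|z rest]]] //= hu hmu hmw nuw _.
have K := three_lemma hx E hu.
move: hmu; rewrite in_cons => /orP[/eqP eu|hu'].
  move: hmw; rewrite in_cons => /orP[/eqP ew|hw'].
    by rewrite eu ew eqxx in nuw.
  by rewrite eu; apply: t_step; exact: (K w hw').1.
move: hmw; rewrite in_cons => /orP[/eqP ew|hw'].
  by rewrite ew; apply: t_step; exact: (K u hu').2.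
apply: (t_trans _ _ _ a); apply: t_step; [exact: (K u hu').2 | exact: (K w hw').1].
Qed.

Lemma rec_single (T : finType) (x a b : T) s p q : Lx x s = [:: a; b] -> a != b ->
  s = p ++ (b, x) :: q -> Lx x p = [:: a].
Proof.
move=> hL nab hs; move: hL; rewrite hs Lx_cat Lx_cons_self.
case: (Lx x p) => [|a' [|b' l]] /=.
- by case=> e _; rewrite e eqxx in nab.
- by case=> ->.
- by case=> _ _; case: l.
Qed.

Definition peq (T : eqType) (a1 b1 a2 b2 : T) :=
  ((a2 == a1) && (b2 == b1)) || ((a2 == b1) && (b2 == a1)).

Lemma two_events (T : finType) (adj : rel T) (c : T) (s p q r : seq (T * T))
  (a1 b1 x1 a2 b2 x2 : T) :
  ~~ adj c x1 -> ~~ adj c x2 -> s = p ++ (b1, x1) :: q ++ (b2, x2) :: r ->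
  Lx x1 s = [:: a1; b1] -> Lx x2 s = [:: a2; b2] -> a1 != b1 -> a2 != b2 ->
  peq a1 b1 a2 b2 ->
  (a2, b2) \in st_A (fin adj c s) /\ (b2, a2) \in st_A (fin adj c s).
Proof.
move=> h1 h2 hs hL1 hL2 n1 n2 hab.
have E1 := rec_single hL1 n1 hs.
have r1 := rec_fold p h1; rewrite E1 /= in r1.
have hI1 := ev_E2I b1 h1 r1.
set p' := p ++ (b1, x1) :: q.
have hs' : s = p' ++ (b2, x2) :: r by rewrite hs /p' -catA.
have E2 := rec_single hL2 n2 hs'.
have r2 := rec_fold p' h2; rewrite E2 /= in r2.
have hI2 : (b1, a1) \in st_I (fin adj c p').
  rewrite /p' foldl_cat /=.
  exact: (subsetP (fold_I_sub _ _ _ _) _ hI1).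
have sym2 : symS (st_I (fin adj c p')).
  by apply: fold_symI => a b; rewrite /= inE.
have hI3 : (b2, a2) \in st_I (fin adj c p').
  by case/orP: hab => /andP[/eqP -> /eqP ->] //; apply: sym2.
have [hA1 hA2] := ev_E2A h2 r2 hI3.
by split; [apply: (fin_A_of hs' hA2) | apply: (fin_A_of hs' hA1)].
Qed.

Lemma two_any (T : finType) (adj : rel T) (c : T) (s : seq (T * T))
  (a1 b1 x1 a2 b2 x2 : T) :
  ~~ adj c x1 -> ~~ adj c x2 -> x1 != x2 ->
  Lx x1 s = [:: a1; b1] -> Lx x2 s = [:: a2; b2] -> a1 != b1 -> a2 != b2 ->
  peq a1 b1 a2 b2 ->
  (a2, b2) \in st_A (fin adj c s) /\ (b2, a2) \in st_A (fin adj c s).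
Proof.
move=> h1 h2 nx hL1 hL2 n1 n2 hab.
have m1 : (b1, x1) \in s by apply: memLx; rewrite hL1 !inE eqxx orbT.
have m2 : (b2, x2) \in s by apply: memLx; rewrite hL2 !inE eqxx orbT.
have [p [q' hs]] := split_ex m1.
have m2' : (b2, x2) \in p ++ (b1, x1) :: q' by rewrite -hs.
move: m2'; rewrite mem_cat in_cons => /orP[m3|/orP[/eqP [_ ex]|m3]].
- have [p0 [q hp]] := split_ex m3.
  have hs2 : s = p0 ++ (b2, x2) :: q ++ (b1, x1) :: q' by rewrite hs hp -catA.
  have hab' : peq a2 b2 a1 b1.
    by case/orP: hab => /andP[/eqP -> /eqP ->]; rewrite /peq !eqxx ?orbT.
  have [k1 k2] := two_events h2 h1 hs2 hL2 hL1 n2 n1 hab'.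
  by case/orP: hab => /andP[/eqP -> /eqP ->]; split.
- by rewrite ex eqxx in nx.
- have [q [r hq]] := split_ex m3.
  have hs2 : s = p ++ (b1, x1) :: q ++ (b2, x2) :: r by rewrite hs hq.
  exact: two_events h1 h2 hs2 hL1 hL2 n1 n2 hab.
Qed.

Lemma two_form (T : eqType) (L : seq T) (u w : T) : uniq L -> size L <= 2 ->
  u \in L -> w \in L -> u != w -> L = [:: u; w] \/ L = [:: w; u].
Proof.
case: L => [|a [|b [|z l]]] //= _ _; rewrite ?inE.
- by move=> /eqP -> /eqP ->; rewrite eqxx.
- case/orP => /eqP -> /orP[] /eqP -> //; rewrite ?eqxx //; by [left | right].
Qed.

Theorem mainTheorem4 (T : finType) (adj : rel T)
  (adj_sym : symmetric adj) (adj_irr : irreflexive adj)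
  (Gconn : connected_graph adj)
  (c : T) (ord : seq T) (nbr : T -> seq T)
  (Hord : valid_order adj c ord nbr)
  (u w : T) (Hu : adj c u) (Hw : adj c w) (Huw : u != w) :
  ((exists x, square_top adj c u w x /\ square_has_chord adj c u w x) \/
   (exists x, square_top adj c u w x /\ ~ unique_top adj c x) \/
   (exists x1 x2, x1 != x2 /\ square_top adj c u w x1 /\ square_top adj c u w x2)) ->
  clos_trans T (beta_c adj c ord nbr) u w.
Proof.
move=> H.
case: Hord => uo [memo nb].
have -> : beta_c adj c ord nbr = fun a b => (a, b) \in st_A (fin adj c (events ord nbr)).
  by rewrite /beta_c scan_events.
set ev := events ord nbr.
have cneq : forall y, adj c y -> y != c.
  by move=> y h; apply/eqP => e; rewrite e adj_irr in h.
have ev_mem : forall a b, adj c a -> adj a b -> b != c -> (a, b) \in ev.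
  move=> a b ha hab hb; apply: mem_events; first by rewrite memo.
  by rewrite (nb a ha).2 hab hb.
have primal : forall a b, adj c a -> adj c b -> adj a b ->
    (a, b) \in st_A (fin adj c ev) /\ (b, a) \in st_A (fin adj c ev).
  move=> a b ha hb hab.
  have [p [q hs]] := split_ex (ev_mem a b ha hab (cneq b hb)).
  have [k1 k2] := ev_E1 (fin adj c p) a hb.
  by split; apply: (fin_A_of hs).
have Lu : forall x, uniq (Lx x ev).
  move=> x; rewrite /ev Lx_events ?filter_uniq //.
  by move=> v hv; apply: (nb v _).1; rewrite -memo.
have Lmem : forall x y, x != c -> (y \in Lx x ev) = adj c y && adj y x.
  move=> x y hx; rewrite /ev Lx_events; last by move=> v hv; apply: (nb v _).1; rewrite -memo.
  rewrite mem_filter memo; case hy: (adj c y); last by rewrite andbF.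
  by rewrite (nb y hy).2 hx /= !andbT.
have chord : forall x, square_top adj c u w x -> square_has_chord adj c u w x ->
    clos_trans T (fun a b => (a, b) \in st_A (fin adj c ev)) u w.
  move=> x [xc [hux hwx]] [huw|hcx].
    by apply: t_step; exact: (primal u w Hu Hw huw).1.
  apply: (t_trans _ _ _ x); apply: t_step.
    exact: (primal u x Hu hcx hux).1.
  exact: (primal w x Hw hcx hwx).2.
have nonu : forall x, square_top adj c u w x -> ~~ adj c x -> 2 < size (Lx x ev) ->
    clos_trans T (fun a b => (a, b) \in st_A (fin adj c ev)) u w.
  move=> x [xc [hux hwx]] hcx hs.
  apply: gen3 hcx (Lu x) _ _ Huw hs; by rewrite Lmem // ?Hu ?Hw.
case: H => [[x [hx hch]]|[[x [hx hnu]]|[x1 [x2 [nx [hx1 hx2]]]]]].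
- exact: chord hx hch.
- case hcx: (adj c x); first by apply: (chord x hx); right.
  apply: (nonu x hx); first by rewrite hcx.
  case: hx => xc [hux hwx].
  set S := [set y | adj x y && adj c y].
  have uS : u \in S by rewrite inE adj_sym hux Hu.
  have wS : w \in S by rewrite inE adj_sym hwx Hw.
  have [y /and3P[yS yu yw]] : exists y, [&& y \in S, y != u & y != w].
    case: (boolP [exists y, [&& y \in S, y != u & y != w]]) => [/existsP //|/existsPn h].
    exfalso; apply: hnu; rewrite /unique_top -/S.
    have -> : S = [set u; w].
      apply/eqP; rewrite eqEsubset; apply/andP; split.
        apply/subsetP => y yS; have := h y; rewrite yS /= negb_and !negbK => hy.
        by rewrite !inE.
      by apply/subsetP => y; rewrite !inE => /orP[] /eqP ->; rewrite adj_sym ?hux ?hwx ?Hu ?Hw.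
    by rewrite cards2 Huw.
  have : 3 <= size (Lx x ev).
    apply: (@uniq_leq_size _ [:: u; w; y]).
      by rewrite /= !inE negb_or Huw eq_sym yu eq_sym yw.
    move=> v; rewrite !inE => /or3P[] /eqP ->; rewrite Lmem //.
    + by rewrite Hu hux.
    + by rewrite Hw hwx.
    + by move: yS; rewrite inE adj_sym andbC.
  by [].
- case hc1: (adj c x1); first by apply: (chord x1 hx1); right.
  case hc2: (adj c x2); first by apply: (chord x2 hx2); right.
  case hs1: (2 < size (Lx x1 ev)); first by apply: (nonu x1 hx1) => //; rewrite hc1.
  case hs2: (2 < size (Lx x2 ev)); first by apply: (nonu x2 hx2) => //; rewrite hc2.
  case: hx1 => xc1 [hux1 hwx1]; case: hx2 => xc2 [hux2 hwx2].
  have le1 : size (Lx x1 ev) <= 2 by rewrite leqNgt hs1.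
  have le2 : size (Lx x2 ev) <= 2 by rewrite leqNgt hs2.
  have mu1 : u \in Lx x1 ev by rewrite Lmem // Hu hux1.
  have mw1 : w \in Lx x1 ev by rewrite Lmem // Hw hwx1.
  have mu2 : u \in Lx x2 ev by rewrite Lmem // Hu hux2.
  have mw2 : w \in Lx x2 ev by rewrite Lmem // Hw hwx2.
  have hwu : w != u by rewrite eq_sym.
  apply: t_step.
  case: (two_form (Lu x1) le1 mu1 mw1 Huw) => E1;
   case: (two_form (Lu x2) le2 mu2 mw2 Huw) => E2.
  + by case: (two_any (negbT hc1) (negbT hc2) nx E1 E2 Huw Huw _) => //; rewrite /peq !eqxx.
  + by case: (two_any (negbT hc1) (negbT hc2) nx E1 E2 Huw hwu _) => //; rewrite /peq !eqxx ?orbT.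
  + by case: (two_any (negbT hc1) (negbT hc2) nx E1 E2 hwu Huw _) => //; rewrite /peq !eqxx ?orbT.
  + by case: (two_any (negbT hc1) (negbT hc2) nx E1 E2 hwu hwu _) => //; rewrite /peq !eqxx.
Qed.
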